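(* Let $F,G:\mathcal C\rightrightarrows\mathcal D$ be functors between small categories. Their coequalizer $\mathrm{coeq}(F,G)$ in $\mathbf{Cat}$ is the following category: its set of objects is $Q_0$; its morphisms are those of the free category on the reflexive quiver $Q=(Q_0,Q_1)$, subject to the relations $[g]\circ[f]=[h]$ for $[f],[g],[h]\in Q_1$ whenever there exist composable morphisms $f'$, $g'$ of $\mathcal D$ with $[f']=[f]$, $[g']=[g]$ and $[g'\circ f']=[h]$ (i.e. representatives forming the boundary of a $2$-simplex of $N\mathcal D$).
   Context: $Q_0$ is the coequalizer in $\mathbf{Set}$ of the object maps $F_0,G_0:\mathrm{obj}\,\mathcal C\rightrightarrows\mathrm{obj}\,\mathcal D$ (the quotient of $\mathrm{obj}\,\mathcal D$ by the equivalence relation generated by $F(c)\sim G(c)$), and $Q_1$ is the coequalizer in $\mathbf{Set}$ of the morphism maps $F_1,G_1:\mathrm{mor}\,\mathcal C\rightrightarrows\mathrm{mor}\,\mathcal D$; classes are written $[x]$. Source, target and identity maps of $\mathcal D$ descend to make $Q=(Q_0,Q_1)$ a reflexive quiver (vertices $Q_0$, edges $Q_1$, source/target maps $Q_1\to Q_0$, distinguished loops the classes of identities); this is the $1$-truncation of the coequalizer of the nerves $NF,NG:N\mathcal C\rightrightarrows N\mathcal D$ in simplicial sets. The free category on a reflexive quiver has the vertices as objects and finite paths of non-distinguished edges as morphisms (distinguished loops becoming identities), composed by concatenation; ''subject to the relations'' means quotienting by the smallest congruence containing them. *)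

(* Defs.v *)
From Stdlib Require Import Relations List ClassicalEpsilon.
Import ListNotations.
Set Implicit Arguments.

Definition quot (T : Type) (R : T -> T -> Prop) : Type :=
  {P : T -> Prop | exists x, P = clos_refl_sym_trans T R x}.
Definition cls {T : Type} (R : T -> T -> Prop) (x : T) : quot R :=
  exist _ (clos_refl_sym_trans T R x) (ex_intro _ x eq_refl).
Definition rep {T : Type} {R : T -> T -> Prop} (q : quot R) : T :=
  proj1_sig (constructive_indefinite_description _ (proj2_sig q)).

Record PreCat : Type := {
  Obj : Type;
  Hom : Obj -> Obj -> Type;
  idm : forall a, Hom a a;
  comp : forall a b c, Hom b c -> Hom a b -> Hom a c
}.
Arguments idm {p} a : rename.
Arguments comp {p a b c} g f : rename.

Definition IsCat (C : PreCat) : Prop :=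
  (forall a b (f : Hom C a b), comp (idm b) f = f) /\
  (forall a b (f : Hom C a b), comp f (idm a) = f) /\
  (forall a b c d (f : Hom C a b) (g : Hom C b c) (h : Hom C c d),
      comp h (comp g f) = comp (comp h g) f).

Record PreFunctor (C D : PreCat) : Type := {
  fobj : Obj C -> Obj D;
  fmap : forall a b, Hom C a b -> Hom D (fobj a) (fobj b)
}.
Arguments fobj {C D} p _.
Arguments fmap {C D} p {a b} _.

Definition IsFunctor {C D : PreCat} (F : PreFunctor C D) : Prop :=
  (forall a, fmap F (idm a) = idm (fobj F a)) /\
  (forall a b c (f : Hom C a b) (g : Hom C b c),
      fmap F (comp g f) = comp (fmap F g) (fmap F f)).

Definition Fcomp {C D E : PreCat} (G : PreFunctor D E) (F : PreFunctor C D)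
  : PreFunctor C E :=
  {| fobj := fun a => fobj G (fobj F a);
     fmap := fun a b f => fmap G (fmap F f) |}.

Definition Mor (C : PreCat) : Type := {a : Obj C & {b : Obj C & Hom C a b}}.
Definition mk {C : PreCat} {a b : Obj C} (f : Hom C a b) : Mor C :=
  existT _ a (existT _ b f).
Definition msrc {C : PreCat} (m : Mor C) : Obj C := projT1 m.
Definition mtgt {C : PreCat} (m : Mor C) : Obj C := projT1 (projT2 m).
Definition midm {C : PreCat} (a : Obj C) : Mor C := mk (idm a).

Definition mor {C D : PreCat} (F : PreFunctor C D) (m : Mor C) : Mor D :=
  mk (fmap F (projT2 (projT2 m))).

(* equality of functors (equality of their morphism maps; this determines
   the object maps via identities) *)
Definition feq {C D : PreCat} (F G : PreFunctor C D) : Prop :=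
  forall m : Mor C, mor F m = mor G m.

Definition IsCoequalizer {C D : PreCat} (F G : PreFunctor C D)
  (K : PreCat) (P : PreFunctor D K) : Prop :=
  IsCat K /\ IsFunctor P /\ feq (Fcomp P F) (Fcomp P G) /\
  forall (E : PreCat) (H : PreFunctor D E),
    IsCat E -> IsFunctor H -> feq (Fcomp H F) (Fcomp H G) ->
    exists U : PreFunctor K E,
      IsFunctor U /\ feq (Fcomp U P) H /\
      forall U' : PreFunctor K E, IsFunctor U' -> feq (Fcomp U' P) H -> feq U' U.

Section Construction.
Variables (C D : PreCat) (F G : PreFunctor C D).

(* Q_0 : coequalizer in Set of the object maps *)
Definition R0 (x y : Obj D) : Prop := exists c, x = fobj F c /\ y = fobj G c.
Definition Q0 : Type := quot R0.
(* Q_1 : coequalizer in Set of the morphism maps *)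
Definition R1 (x y : Mor D) : Prop := exists m, x = mor F m /\ y = mor G m.
Definition Q1 : Type := quot R1.

Definition qedge (e : Q1) (a b : Q0) : Prop :=
  exists m : Mor D, cls R1 m = e /\ cls R0 (msrc m) = a /\ cls R0 (mtgt m) = b.

(* finite paths of edges of Q from a to b (edges listed from the source) *)
Fixpoint qvalid (a : Q0) (l : list Q1) (b : Q0) : Prop :=
  match l with
  | nil => a = b
  | e :: l' => exists c, qedge e a c /\ qvalid c l' b
  end.

(* generating relations: distinguished loops are identities (free category
   on the reflexive quiver), and [g] o [f] = [h] for 2-simplex boundaries *)
Inductive qrule : list Q1 -> list Q1 -> Prop :=
| qrule_id : forall (e : Q1) (x : Obj D), cls R1 (midm x) = e -> qrule [e] []
| qrule_comp : forall (e1 e2 e3 : Q1) (a b c : Obj D)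
                 (f : Hom D a b) (g : Hom D b c),
    cls R1 (mk f) = e1 -> cls R1 (mk g) = e2 -> cls R1 (mk (comp g f)) = e3 ->
    qrule [e1; e2] [e3].

(* one rewriting step inside a path: generates the smallest congruence *)
Inductive qstep : list Q1 -> list Q1 -> Prop :=
| qstep_intro : forall l1 L R l2, qrule L R -> qstep (l1 ++ L ++ l2) (l1 ++ R ++ l2).

Definition VPath (a b : Q0) : Type := {l : list Q1 | qvalid a l b}.
Definition CHom (a b : Q0) : Type :=
  quot (fun p q : VPath a b => qstep (proj1_sig p) (proj1_sig q)).

Lemma qvalid_app : forall (l : list Q1) (a b c : Q0) (l' : list Q1),
  qvalid a l b -> qvalid b l' c -> qvalid a (l ++ l') c.
Proof.
  induction l as [|e l IH]; simpl; intros a b c l' H1 H2.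
  - subst; exact H2.
  - destruct H1 as [d [He Hl]]. exists d. split; [exact He|]. eapply IH; eauto.
Qed.

Definition cid (a : Q0) : CHom a a := cls _ (exist _ nil eq_refl : VPath a a).

Definition ccomp (a b c : Q0) (q : CHom b c) (p : CHom a b) : CHom a c :=
  cls _ (exist _ (proj1_sig (rep p) ++ proj1_sig (rep q))
           (@qvalid_app _ a b c _ (proj2_sig (rep p)) (proj2_sig (rep q))) : VPath a c).

Definition coeqCat : PreCat :=
  {| Obj := Q0; Hom := CHom; idm := cid; comp := ccomp |}.

Definition proj_edge_valid (a b : Obj D) (f : Hom D a b) :
  qvalid (cls R0 a) [cls R1 (mk f)] (cls R0 b) :=
  ex_intro _ (cls R0 b)
    (conj (ex_intro _ (mk f) (conj eq_refl (conj eq_refl eq_refl))) eq_refl).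

Definition coeqProj : PreFunctor D coeqCat :=
  {| fobj := fun x => cls R0 x : Obj coeqCat;
     fmap := fun a b f =>
       cls _ (exist _ [cls R1 (mk f)] (@proj_edge_valid a b f)
              : VPath (cls R0 a) (cls R0 b)) |}.

End Construction.

Arguments IsCoequalizer {C D} F G K P.

(* Main.v *)
Require Import Defs.
From Stdlib Require Import Relations List ClassicalEpsilon FunctionalExtensionality PropExtensionality ProofIrrelevance Eqdep.
Import ListNotations.
Set Implicit Arguments.

Lemma cls_eq (T : Type) (R : T -> T -> Prop) x y :
  clos_refl_sym_trans T R x y -> cls R x = cls R y.
Proof.
  intro Hxy. unfold cls.
  assert (E : clos_refl_sym_trans T R x = clos_refl_sym_trans T R y).
  { apply functional_extensionality; intro z; apply propositional_extensionality; split; intro H.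
    - eapply rst_trans; [apply rst_sym; exact Hxy| exact H].
    - eapply rst_trans; [exact Hxy| exact H]. }
  revert Hxy. generalize (ex_intro (fun z => clos_refl_sym_trans T R x = clos_refl_sym_trans T R z) x eq_refl).
  generalize (ex_intro (fun z => clos_refl_sym_trans T R y = clos_refl_sym_trans T R z) y eq_refl).
  rewrite E. intros e1 e2 _. f_equal. apply proof_irrelevance.
Qed.

Lemma cls_inv (T : Type) (R : T -> T -> Prop) x y :
  cls R x = cls R y -> clos_refl_sym_trans T R x y.
Proof.
  intro H. apply (f_equal (@proj1_sig _ _)) in H. simpl in H.
  rewrite H. apply rst_refl.
Qed.

Lemma rep_spec (T : Type) (R : T -> T -> Prop) (q : quot R) :
  proj1_sig q = clos_refl_sym_trans T R (rep q).
Proof.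
  unfold rep. destruct (constructive_indefinite_description _ _) as [z Hz]. exact Hz.
Qed.

Lemma cls_rep (T : Type) (R : T -> T -> Prop) (q : quot R) : cls R (rep q) = q.
Proof.
  pose proof (rep_spec q) as Hs. generalize dependent (rep q). intros r Hs.
  destruct q as [P HP]. unfold cls. simpl in *. subst P.
  f_equal. apply proof_irrelevance.
Qed.

Lemma rep_cls (T : Type) (R : T -> T -> Prop) x :
  clos_refl_sym_trans T R (rep (cls R x)) x.
Proof.
  apply cls_inv. rewrite cls_rep. reflexivity.
Qed.

Lemma crst_map (A B : Type) (R : A -> A -> Prop) (S : B -> B -> Prop) (f : A -> B) :
  (forall x y, R x y -> S (f x) (f y)) ->
  forall x y, clos_refl_sym_trans A R x y -> clos_refl_sym_trans B S (f x) (f y).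
Proof.
  intros Hf x y H; induction H.
  - apply rst_step; auto.
  - apply rst_refl.
  - apply rst_sym; auto.
  - eapply rst_trans; eauto.
Qed.
Section Cat1.
Variables (C D : PreCat) (F G : PreFunctor C D).

Notation CR a b := (fun p q : VPath (F:=F) (G:=G) a b => qstep (proj1_sig p) (proj1_sig q)).
Notation crst := clos_refl_sym_trans.

Lemma vp_eq a b (v w : VPath (F:=F) (G:=G) a b) : proj1_sig v = proj1_sig w -> v = w.
Proof. destruct v, w; simpl; intros; subst; f_equal; apply proof_irrelevance. Qed.

Definition vapp a b c (v1 : VPath (F:=F) (G:=G) a b) (v2 : VPath b c) : VPath a c :=
  exist _ (proj1_sig v1 ++ proj1_sig v2) (@qvalid_app _ _ F G _ a b c _ (proj2_sig v1) (proj2_sig v2)).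

Lemma vapp_congl a b c (v1 v1' : VPath a b) (v2 : VPath b c) :
  crst _ (CR a b) v1 v1' -> crst _ (CR a c) (vapp v1 v2) (vapp v1' v2).
Proof.
  apply (@crst_map _ _ (CR a b) (CR a c) (fun v => vapp v v2)).
  intros x y H; simpl in *. destruct H as [l1 L R l2 Hr].
  rewrite <- !app_assoc. apply qstep_intro; auto.
Qed.

Lemma vapp_congr a b c (v1 : VPath a b) (v2 v2' : VPath b c) :
  crst _ (CR b c) v2 v2' -> crst _ (CR a c) (vapp v1 v2) (vapp v1 v2').
Proof.
  apply (@crst_map _ _ (CR b c) (CR a c) (fun v => vapp v1 v)).
  intros x y H; simpl in *. destruct H as [l1 L R l2 Hr].
  rewrite !app_assoc. rewrite <- (app_assoc _ L l2), <- (app_assoc _ R l2).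
  apply qstep_intro; auto.
Qed.

Lemma ccomp_cls a b c (v1 : VPath a b) (v2 : VPath b c) :
  ccomp (cls _ v2 : CHom b c) (cls _ v1 : CHom a b) = cls _ (vapp v1 v2).
Proof.
  change (cls (CR a c) (vapp (rep (cls (CR a b) v1)) (rep (cls (CR b c) v2))) = cls _ (vapp v1 v2)).
  apply cls_eq. eapply rst_trans.
  - apply vapp_congl, rep_cls.
  - apply vapp_congr, rep_cls.
Qed.

Lemma coeq_isCat : IsCat (coeqCat F G).
Proof.
  split; [|split]; simpl.
  - intros a b f. rewrite <- (cls_rep f). unfold cid. rewrite ccomp_cls.
    f_equal. apply vp_eq; simpl. apply app_nil_r.
  - intros a b f. rewrite <- (cls_rep f). unfold cid. rewrite ccomp_cls.
    f_equal. apply vp_eq; simpl. reflexivity.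
  - intros a b c d f g h. rewrite <- (cls_rep f), <- (cls_rep g), <- (cls_rep h).
    rewrite !ccomp_cls. f_equal. apply vp_eq; simpl. symmetry; apply app_assoc.
Qed.

Lemma R1_src m m' : crst _ (R1 F G) m m' -> crst _ (R0 F G) (msrc m) (msrc m').
Proof.
  intro H; induction H.
  - destruct H as [z [-> ->]]. apply rst_step. exists (msrc z). split; reflexivity.
  - apply rst_refl.
  - apply rst_sym; auto.
  - eapply rst_trans; eauto.
Qed.

Lemma R1_tgt m m' : crst _ (R1 F G) m m' -> crst _ (R0 F G) (mtgt m) (mtgt m').
Proof.
  intro H; induction H.
  - destruct H as [z [-> ->]]. apply rst_step. exists (mtgt z). split; reflexivity.
  - apply rst_refl.
  - apply rst_sym; auto.
  - eapply rst_trans; eauto.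
Qed.

Lemma coeqProj_functor : IsCat D -> IsFunctor (coeqProj F G).
Proof.
  intros _. split; simpl.
  - intro a. unfold cid. apply cls_eq. apply rst_step; simpl.
    apply (@qstep_intro _ _ F G nil (cls (R1 F G) (mk (idm a)) :: nil) nil nil).
    eapply qrule_id. reflexivity.
  - intros a b c f g. rewrite ccomp_cls. apply cls_eq. apply rst_sym, rst_step; simpl.
    apply (@qstep_intro _ _ F G nil (cls (R1 F G) (mk f) :: cls (R1 F G) (mk g) :: nil) (cls (R1 F G) (mk (comp g f)) :: nil) nil).
    eapply qrule_comp; reflexivity.
Qed.

Lemma mk_P_eq (qa qa' qb qb' : Q0 F G) l l' (pf : qvalid qa l qb) (pf' : qvalid qa' l' qb') :
  qa = qa' -> qb = qb' -> l = l' ->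
  @mk (coeqCat F G) qa qb (cls _ (exist _ l pf : VPath qa qb)) =
  @mk (coeqCat F G) qa' qb' (cls _ (exist _ l' pf' : VPath qa' qb')).
Proof. intros -> -> ->. rewrite (proof_irrelevance _ pf pf'). reflexivity. Qed.

Lemma coeqProj_feq : feq (Fcomp (coeqProj F G) F) (Fcomp (coeqProj F G) G).
Proof.
  intros [a [b f]]. unfold mor; simpl. apply mk_P_eq.
  - apply cls_eq, rst_step. exists a; split; reflexivity.
  - apply cls_eq, rst_step. exists b; split; reflexivity.
  - f_equal. apply cls_eq, rst_step. exists (mk f). split; reflexivity.
Qed.

End Cat1.
Section Univ.
Variables (C D : PreCat) (F G : PreFunctor C D) (E : PreCat) (H : PreFunctor D E).
Hypotheses (HE : IsCat E) (HH : IsFunctor H) (Hfg : feq (Fcomp H F) (Fcomp H G)).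

Notation CR a b := (fun p q : VPath (F:=F) (G:=G) a b => qstep (proj1_sig p) (proj1_sig q)).
Notation crst := clos_refl_sym_trans.

Lemma H_R1 m m' : crst _ (R1 F G) m m' -> mor H m = mor H m'.
Proof.
  intro Hm; induction Hm; try congruence.
  destruct H0 as [z [-> ->]]. apply Hfg.
Qed.

Lemma H_R0 x y : crst _ (R0 F G) x y -> fobj H x = fobj H y.
Proof.
  intro Hm; induction Hm; try congruence.
  destruct H0 as [z [-> ->]]. pose proof (Hfg (midm z)) as K.
  apply (f_equal msrc) in K. exact K.
Qed.

Lemma mk_eq_inv (x y x' y' : Obj E) (h : Hom E x y) (h' : Hom E x' y') :
  mk h = mk h' -> x = x' /\ y = y'.
Proof. intro K. split; [apply (f_equal msrc) in K | apply (f_equal mtgt) in K]; exact K. Qed.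

Lemma mk_inj (x y : Obj E) (h h' : Hom E x y) : mk h = mk h' -> h = h'.
Proof. intro K. unfold mk in K. apply inj_pair2 in K. apply inj_pair2 in K. exact K. Qed.

Lemma mk_comp (a b c a' b' c' : Obj E) (f : Hom E a b) (g : Hom E b c)
  (f' : Hom E a' b') (g' : Hom E b' c') :
  mk f = mk f' -> mk g = mk g' -> mk (comp g f) = mk (comp g' f').
Proof.
  intros Hf Hg. destruct (mk_eq_inv Hf) as [-> ->]. destruct (mk_eq_inv Hg) as [_ ->].
  apply mk_inj in Hf; apply mk_inj in Hg; subst; reflexivity.
Qed.

Inductive interp : forall x y : Obj E, list (Q1 F G) -> Hom E x y -> Prop :=
| inil x : interp x x nil (idm x)
| icons a b (f : Hom D a b) e l y (h : Hom E (fobj H b) y) :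
    cls (R1 F G) (mk f) = e -> interp (fobj H b) y l h -> interp (fobj H a) y (e :: l) (comp h (fmap H f)).
Arguments interp {x y} _ _.

Lemma interp_mk x y l (h : Hom E x y) x' y' (h' : Hom E x' y') :
  interp l h -> mk h = mk h' -> interp l h'.
Proof.
  intros Hi K. destruct (mk_eq_inv K) as [-> ->]. apply mk_inj in K. subst; exact Hi.
Qed.

Lemma interp_nil_inv x y (h : Hom E x y) : interp nil h -> mk h = midm x.
Proof.
  intro Hi. remember nil as l0. destruct Hi; [reflexivity | discriminate].
Qed.

Lemma interp_cons_inv x y e l (h : Hom E x y) : interp (e :: l) h ->
  exists a b (f : Hom D a b) (h0 : Hom E (fobj H b) y),
    cls (R1 F G) (mk f) = e /\ interp l h0 /\ mk h = mk (comp h0 (fmap H f)).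
Proof.
  intro Hi. remember (e :: l) as l0. destruct Hi; [discriminate|].
  injection Heql0; intros; subst. exists a, b, f, h. auto.
Qed.

Lemma H_cls a b (f : Hom D a b) a' b' (f' : Hom D a' b') :
  cls (R1 F G) (mk f) = cls (R1 F G) (mk f') -> mk (fmap H f) = mk (fmap H f').
Proof. intro K. apply cls_inv in K. apply H_R1 in K. exact K. Qed.

Lemma interp_unique_mk x y l (h : Hom E x y) : interp l h ->
  forall x' y' (h' : Hom E x' y'), interp l h' -> x = x' -> mk h = mk h'.
Proof.
  intro Hi; induction Hi; intros x' y' h' Hi' Hx; subst x'.
  - apply interp_nil_inv in Hi'. rewrite Hi'. reflexivity.
  - apply interp_cons_inv in Hi'. destruct Hi' as [a' [b' [f' [h0 [Hc [Hl Hm]]]]]].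
    rewrite Hm. assert (K : mk (fmap H f) = mk (fmap H f')) by (apply H_cls; congruence).
    apply mk_comp; [exact K|]. apply IHHi with (1 := Hl).
    apply mk_eq_inv in K. apply K.
Qed.

Lemma interp_unique x y l (h h' : Hom E x y) : interp l h -> interp l h' -> h = h'.
Proof. intros; apply mk_inj. eapply interp_unique_mk; eauto. Qed.

Lemma interp_app x y l1 (h1 : Hom E x y) : interp l1 h1 ->
  forall z l2 (h2 : Hom E y z), interp l2 h2 -> interp (l1 ++ l2) (comp h2 h1).
Proof.
  destruct HE as [Hl [Hr Ha]].
  intro Hi; induction Hi; intros z l2 h2 Hi2; simpl.
  - rewrite Hr. exact Hi2.
  - rewrite Ha. apply icons; auto.
Qed.

Lemma interp_split l1 l2 x z (h : Hom E x z) : interp (l1 ++ l2) h ->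
  exists y (h1 : Hom E x y) (h2 : Hom E y z), interp l1 h1 /\ interp l2 h2 /\ h = comp h2 h1.
Proof.
  destruct HE as [Hl [Hr Ha]].
  revert x h; induction l1 as [|e l1 IH]; intros x h Hi; simpl in *.
  - exists x, (idm x), h. split; [constructor|]. split; auto.
  - apply interp_cons_inv in Hi. destruct Hi as [a [b [f [h0 [Hc [Hi Hm]]]]]].
    destruct (mk_eq_inv Hm) as [-> _]. apply mk_inj in Hm. subst h.
    destruct (IH _ _ Hi) as [y [h1 [h2 [H1 [H2 ->]]]]].
    exists y, (comp h1 (fmap H f)), h2. split; [apply icons; auto|]. split; auto.
Qed.

Lemma rule_fwd L R x y (h : Hom E x y) : qrule L R -> interp L h -> interp R h.
Proof.
  destruct HE as [Hl [Hr Ha]]. destruct HH as [Hid Hcomp].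
  intros Hq Hi; destruct Hq.
  - apply interp_cons_inv in Hi. destruct Hi as [a [b [f [h0 [Hc [Hi Hm]]]]]].
    apply interp_nil_inv in Hi. subst e.
    apply H_cls in Hc. unfold midm in Hi.
    destruct (mk_eq_inv Hi) as [_ Hy]. subst y. apply mk_inj in Hi. subst h0.
    rewrite Hl, Hc, Hid in Hm.
    apply interp_mk with (h := idm (fobj H x0)); [constructor|]. symmetry; exact Hm.
  - apply interp_cons_inv in Hi. destruct Hi as [a1 [b1 [f1 [h0 [Hc1 [Hi Hm]]]]]].
    apply interp_cons_inv in Hi. destruct Hi as [a2 [b2 [f2 [h2 [Hc2 [Hi Hm2]]]]]].
    apply interp_nil_inv in Hi. subst.
    eapply interp_mk.
    + apply icons with (f := comp g f); [reflexivity| apply inil].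
    + rewrite Hm. rewrite Hl, Hcomp. apply mk_comp.
      * apply H_cls. symmetry; exact Hc1.
      * rewrite Hm2. destruct (mk_eq_inv Hi) as [_ ->]. apply mk_inj in Hi. subst h2.
        rewrite Hl. apply H_cls. symmetry; exact Hc2.
Qed.
Lemma step_fwd l l' x y (h : Hom E x y) : qstep l l' -> interp l h -> interp l' h.
Proof.
  intros [l1 L R l2 Hr] Hi.
  destruct (interp_split l1 (L ++ l2) Hi) as [y1 [h1 [h2 [H1 [H2 ->]]]]].
  destruct (interp_split L l2 H2) as [y2 [h3 [h4 [H3 [H4 ->]]]]].
  apply interp_app; auto. apply interp_app; auto. eapply rule_fwd; eauto.
Qed.

Definition UO (q : Q0 F G) : Obj E := fobj H (rep q).

Lemma UO_cls x : UO (cls (R0 F G) x) = fobj H x.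
Proof. apply H_R0. apply rep_cls. Qed.

Lemma exists_interp l : forall a b, qvalid a l b -> exists h : Hom E (UO a) (UO b), interp l h.
Proof.
  induction l as [|e l IH]; simpl; intros a b Hv.
  - subst. exists (idm _). constructor.
  - destruct Hv as [c [[md [Hmd [Ha Hc]]] Hl]].
    destruct (IH _ _ Hl) as [h' Hi]. subst a c. destruct md as [a0 [b0 f]]. simpl in *.
    revert h' Hi. rewrite !UO_cls. intros h' Hi.
    exists (comp h' (fmap H f)). apply icons; auto.
Qed.

Definition Fv a b (v : VPath (F:=F) (G:=G) a b) : Hom E (UO a) (UO b) :=
  proj1_sig (constructive_indefinite_description _ (exists_interp _ _ _ (proj2_sig v))).

Lemma Fv_spec a b (v : VPath a b) : interp (proj1_sig v) (Fv v).
Proof. unfold Fv. destruct (constructive_indefinite_description _ _) as [h Hh]. exact Hh. Qed.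

Lemma Fv_crst a b (v w : VPath a b) : crst _ (CR a b) v w -> Fv v = Fv w.
Proof.
  intro K; induction K; try congruence.
  symmetry. apply (interp_unique (Fv_spec y)). eapply step_fwd; [exact H0|]. apply Fv_spec.
Qed.

Definition Ufun : PreFunctor (coeqCat F G) E :=
  @Build_PreFunctor (coeqCat F G) E UO (fun (a b : Q0 F G) (p : CHom a b) => Fv (rep p)).

Lemma U_cls a b (v : VPath a b) : fmap Ufun (cls _ v : CHom a b) = Fv v.
Proof. simpl. apply Fv_crst. apply rep_cls. Qed.

Lemma U_functor : IsFunctor Ufun.
Proof.
  split.
  - intro a. change (fmap Ufun (cls _ (exist _ nil eq_refl : VPath a a)) = idm (UO a)).
    rewrite U_cls. apply (interp_unique (Fv_spec _)). constructor.
  - intros a b c f g. simpl Hom in *. rewrite <- (cls_rep f), <- (cls_rep g).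
    change (fmap Ufun (ccomp (cls _ (rep g)) (cls _ (rep f))) =
      comp (fmap Ufun (cls _ (rep g) : CHom b c)) (fmap Ufun (cls _ (rep f) : CHom a b))).
    rewrite ccomp_cls, !U_cls. apply (interp_unique (Fv_spec _)).
    simpl. apply interp_app; apply Fv_spec.
Qed.

Lemma edge_interp a b (f : Hom D a b) :
  interp (cls (R1 F G) (mk f) :: nil) (fmap H f).
Proof.
  destruct HE as [Hl _]. eapply interp_mk; [apply icons with (f := f); [reflexivity|constructor]|].
  rewrite Hl; reflexivity.
Qed.

Lemma U_feq : feq (Fcomp Ufun (coeqProj F G)) H.
Proof.
  intros [a [b f]]. unfold mor; simpl. change (mk (fmap Ufun (fmap (coeqProj F G) f)) = mk (fmap H f)).
  simpl fmap at 2. rewrite U_cls.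
  eapply interp_unique_mk; [apply Fv_spec | apply edge_interp | apply UO_cls].
Qed.

Lemma U_unique (U' : PreFunctor (coeqCat F G) E) :
  IsFunctor U' -> feq (Fcomp U' (coeqProj F G)) H -> feq U' Ufun.
Proof.
  intros [Uid Ucomp] HU.
  assert (Uobj : forall a, fobj U' a = UO a).
  { intro a. pose proof (HU (midm (rep a))) as K. apply (f_equal msrc) in K. simpl in K.
    rewrite cls_rep in K. exact K. }
  assert (K : forall l a b (pf : qvalid a l b),
    mk (fmap U' (cls _ (exist _ l pf : VPath a b) : CHom a b)) = mk (Fv (exist _ l pf : VPath a b))).
  { induction l as [|e l IH]; intros a b pf.
    - simpl in pf. destruct pf.
      change (mk (fmap U' (cid a)) = mk (Fv (exist _ nil eq_refl : VPath a a))).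
      assert (Hn : Fv (exist _ nil eq_refl : VPath a a) = idm (UO a))
        by (apply (interp_unique (Fv_spec _)); constructor).
      rewrite Uid, Hn, (Uobj a). reflexivity.
    - pose proof pf as pf0. destruct pf0 as [c [He Hl]].
      pose (pf1 := ex_intro (fun c' => qedge e a c' /\ qvalid c' nil c) c (conj He eq_refl)
                   : qvalid a (e :: nil) c). clearbody pf1.
      assert (Hs : (exist _ (e :: l) pf : VPath a b) = vapp (exist _ (e :: nil) pf1) (exist _ l Hl))
        by (apply vp_eq; reflexivity).
      rewrite Hs, <- ccomp_cls. simpl comp in Ucomp. rewrite Ucomp.
      assert (HF : Fv (vapp (exist _ (e :: nil) pf1) (exist _ l Hl)) =
                   comp (Fv (exist _ l Hl : VPath c b)) (Fv (exist _ (e :: nil) pf1 : VPath a c))).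
      { apply (interp_unique (Fv_spec _)). simpl.
        apply (interp_app (Fv_spec (exist _ (e :: nil) pf1 : VPath a c)) (Fv_spec (exist _ l Hl : VPath c b))). }
      rewrite HF. apply mk_comp; [|apply IH].
      clear Hs HF pf IH Hl.
      destruct He as [md [Hmd [Ha Hc]]]. subst. destruct md as [a0 [b0 f]].
      change (mtgt (existT _ a0 (existT _ b0 f) : Mor D)) with b0 in *.
      change (msrc (existT _ a0 (existT _ b0 f) : Mor D)) with a0 in *.
      rewrite (proof_irrelevance _ pf1 (proj_edge_valid F G a0 b0 f)).
 pose proof (HU (mk f)) as HU1. unfold mor in HU1; simpl in HU1.
      etransitivity; [exact HU1|]. symmetry.
      eapply interp_unique_mk; [apply Fv_spec | apply edge_interp | apply UO_cls]. }
  intros [a [b p]]. unfold mor; simpl.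
  change (mk (fmap U' p) = mk (Fv (rep p))).
  rewrite <- (cls_rep p) at 1. destruct (rep p) as [l pf]. apply K.
Qed.

End Univ.

Theorem mainTheorem17 (C D : PreCat) (F G : PreFunctor C D) :
  IsCat C -> IsCat D -> IsFunctor F -> IsFunctor G ->
  IsCoequalizer F G (coeqCat F G) (coeqProj F G).
Proof.
  intros HC HD HF HG.
  split; [apply coeq_isCat|]. split; [apply coeqProj_functor; exact HD|].
  split; [apply coeqProj_feq|].
  intros E H HE HH Hfg. exists (Ufun Hfg). split; [apply U_functor; auto|].
  split; [apply U_feq; auto|]. intros U' HU' HU. apply U_unique; auto.
Qed.
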